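(* Let $d$ be a homogeneous distance on $\mathbb H$ with closed unit ball $B$ centered at $0$, and let $S^+=\partial B\cap\{p: z_p>0\}$. Assume there exist sequences $p_n^-=(x_n^-,0,z_n^-)\in S^+$, $p_n^+=(x_n^+,0,z_n^+)\in S^+$ and constants $a>0$, $\bar x>0$ such that for all $n$: $x_n^-<0<x_n^+$; $z_n^->z_n^+>0$; $z_n^+-z_n^-<-a(x_n^+-x_n^-)$; $\{p\in\mathbb H: x_n^+\le x_p\le\bar x,\ y_p=0,\ z_p>z_n^+\}\subset\mathbb H\setminus B$; and $x_n^+-x_n^-\to0$ as $n\to\infty$. Then BCP does not hold in $(\mathbb H,d)$.
   Context: $\mathbb H=\mathbb R^3$, points $p=(x_p,y_p,z_p)$, group law $(x,y,z)\cdot(x',y',z')=(x+x',y+y',z+z'+\tfrac12(xy'-yx'))$, dilations $\delta_\lambda(x,y,z)=(\lambda x,\lambda y,\lambda^2z)$. A distance is homogeneous if it induces the Euclidean topology, is left invariant and satisfies $d(\delta_\lambda p,\delta_\lambda q)=\lambda d(p,q)$. BCP holds for $d$ if there is $N\geq1$ such that for every bounded $A$ and every family $\mathcal B$ of closed balls with each point of $A$ the center of some ball of $\mathcal B$, some subfamily $\mathcal F\subset\mathcal B$ satisfies $\chi_A\le\sum_{B\in\mathcal F}\chi_B\le N$. *)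

(* Defs.v *)
From Stdlib Require Import Reals Lra List.
Open Scope R_scope.

Definition H : Type := (R * R * R)%type.
Definition xc (p : H) : R := fst (fst p).
Definition yc (p : H) : R := snd (fst p).
Definition zc (p : H) : R := snd p.
Definition mkH (x y z : R) : H := (x, y, z).
Definition H0 : H := mkH 0 0 0.

Definition hmul (p q : H) : H :=
  mkH (xc p + xc q) (yc p + yc q)
      (zc p + zc q + / 2 * (xc p * yc q - yc p * xc q)).

Definition dil (l : R) (p : H) : H := mkH (l * xc p) (l * yc p) (l * l * zc p).

Definition eucl (p q : H) : R :=
  sqrt ((xc p - xc q)^2 + (yc p - yc q)^2 + (zc p - zc q)^2).

Definition open_for (dist : H -> H -> R) (U : H -> Prop) : Prop :=
  forall p, U p -> exists eps, eps > 0 /\ forall q, dist p q < eps -> U q.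

Definition is_metric (d : H -> H -> R) : Prop :=
  (forall p q, 0 <= d p q) /\
  (forall p q, d p q = 0 <-> p = q) /\
  (forall p q, d p q = d q p) /\
  (forall p q r, d p r <= d p q + d q r).

Definition homogeneous_distance (d : H -> H -> R) : Prop :=
  is_metric d /\
  (forall U : H -> Prop, open_for d U <-> open_for eucl U) /\
  (forall g p q, d (hmul g p) (hmul g q) = d p q) /\
  (forall l p q, l > 0 -> d (dil l p) (dil l q) = l * d p q).

Definition closed_ball (d : H -> H -> R) (c : H) (r : R) : H -> Prop :=
  fun q => d c q <= r.

Definition boundary (S : H -> Prop) : H -> Prop :=
  fun p => forall eps, eps > 0 ->
    (exists q, eucl p q < eps /\ S q) /\ (exists q, eucl p q < eps /\ ~ S q).

Definition bounded_for (d : H -> H -> R) (A : H -> Prop) : Prop :=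
  exists R0, forall p, A p -> d H0 p <= R0.

Definition family_of_closed_balls (d : H -> H -> R) (Bf : (H -> Prop) -> Prop) : Prop :=
  forall b, Bf b -> exists c r, r > 0 /\ b = closed_ball d c r.

Definition BCP (d : H -> H -> R) : Prop :=
  exists N : nat, (1 <= N)%nat /\
    forall (A : H -> Prop) (Bf : (H -> Prop) -> Prop),
      bounded_for d A ->
      family_of_closed_balls d Bf ->
      (forall a, A a -> exists r, r > 0 /\ Bf (closed_ball d a r)) ->
      exists Ff : (H -> Prop) -> Prop,
        (forall b, Ff b -> Bf b) /\
        (* chi_A <= sum_{B in F} chi_B *)
        (forall a, A a -> exists b, Ff b /\ b a) /\
        (* sum_{B in F} chi_B <= N : no point lies in N+1 distinct members of F *)
        (forall p (l : list (H -> Prop)), NoDup l ->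
           (forall b, In b l -> Ff b /\ b p) -> (length l <= N)%nat).

(* Main.v *)
Require Import Defs.
From Stdlib Require Import Reals Lra Lia List Arith.
Open Scope R_scope.

Definition cen (xm zm : nat -> R) (r : R) (n : nat) : H :=
  dil r (mkH (- xm n) 0 (- zm n)).

Lemma mkH_eq x y z x' y' z' : x = x' -> y = y' -> z = z' -> mkH x y z = mkH x' y' z'.
Proof. intros; subst; reflexivity. Qed.

Lemma hmul_inv_l x z : hmul (mkH x 0 z) (mkH (-x) 0 (-z)) = H0.
Proof. unfold hmul, H0, xc, yc, zc, mkH; simpl. apply mkH_eq; ring. Qed.

Lemma hmul_H0 x z : hmul (mkH x 0 z) H0 = mkH x 0 z.
Proof. unfold hmul, H0, xc, yc, zc, mkH; simpl. apply mkH_eq; ring. Qed.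

Lemma hmul_plane x z u v : hmul (mkH x 0 z) (mkH u 0 v) = mkH (x+u) 0 (z+v).
Proof. unfold hmul, xc, yc, zc, mkH; simpl. apply mkH_eq; ring. Qed.

Lemma dil_H0 r : dil r H0 = H0.
Proof. unfold dil, H0, xc, yc, zc, mkH; simpl. apply mkH_eq; ring. Qed.

Lemma cen_resc xm zm ri t j : ri <> 0 ->
  cen xm zm (t * ri) j = dil ri (mkH (- (t * xm j)) 0 (- (t * t * zm j))).
Proof. intros; unfold cen, dil, xc, yc, zc, mkH; simpl. apply mkH_eq; ring. Qed.

Theorem theorem6p2 (d : H -> H -> R) (hd : homogeneous_distance d)
  (xm zm xp zp : nat -> R) (a xbar : R) :
  let B := closed_ball d H0 1 in
  let Splus := fun p => boundary B p /\ zc p > 0 in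
  a > 0 -> xbar > 0 ->
  (forall n, Splus (mkH (xm n) 0 (zm n))) ->
  (forall n, Splus (mkH (xp n) 0 (zp n))) ->
  (forall n, xm n < 0 < xp n) ->
  (forall n, zm n > zp n /\ zp n > 0) ->
  (forall n, zp n - zm n < - a * (xp n - xm n)) ->
  (forall n p, xp n <= xc p <= xbar -> yc p = 0 -> zc p > zp n -> ~ B p) ->
  Un_cv (fun n => xp n - xm n) 0 ->
  ~ BCP d.
Proof.
  intros B Splus ha hxbar Hm Hp Hx Hz Hstep Hreg Hcv.
  destruct hd as [[Hnn [Heq0 [Hsym Htri]]] [Htop [Hinv Hhom]]].
  assert (Hbd : forall p, boundary B p -> d H0 p = 1).
  { intros p Hb.
    destruct (Rtotal_order (d H0 p) 1) as [Hl|[He|Hg]]; [exfalso| exact He |exfalso].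
    - assert (Ho : open_for d (fun q => d H0 q < 1)).
      { intros q Hq. exists (1 - d H0 q). split; [lra|].
        intros q' Hq'. pose proof (Htri H0 q q'). lra. }
      apply Htop in Ho. destruct (Ho p Hl) as [e [He Hq]].
      destruct (Hb e He) as [_ [q [Hq1 Hq2]]]. apply Hq2. unfold B, closed_ball.
      pose proof (Hq q Hq1). lra.
    - assert (Ho : open_for d (fun q => d H0 q > 1)).
      { intros q Hq. exists (d H0 q - 1). split; [lra|].
        intros q' Hq'. pose proof (Htri H0 q' q). rewrite (Hsym q' q) in H. lra. }
      apply Htop in Ho. destruct (Ho p Hg) as [e [He Hq]].
      destruct (Hb e He) as [[q [Hq1 Hq2]] _]. unfold B, closed_ball in Hq2.
      pose proof (Hq q Hq1). lra. }
  assert (HcH0 : forall r n, r > 0 -> d (cen xm zm r n) H0 = r).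
  { intros r n Hr. unfold cen. rewrite <- (dil_H0 r), Hhom by lra.
    rewrite <- (Hinv (mkH (xm n) 0 (zm n))), hmul_inv_l, hmul_H0.
    rewrite Hbd; [ring|]. apply (Hm n). }
  assert (Hkey1 : forall ri t n j, ri > 0 -> t > 0 ->
            xp n - xm n <= t * (- xm j) -> t * (- xm j) <= xbar ->
            t * t * zm j <= a * (xp n - xm n) ->
            d (cen xm zm ri n) (cen xm zm (t * ri) j) > ri).
  { intros ri t n j Hri Ht H1 H2 H3.
    rewrite cen_resc by lra. unfold cen. rewrite Hhom by lra.
    rewrite <- (Hinv (mkH (xm n) 0 (zm n))), hmul_inv_l, hmul_plane.
    set (q := mkH (xm n + - (t * xm j)) 0 (zm n + - (t * t * zm j))).
    assert (Hq : ~ B q).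
    { apply (Hreg n); unfold q, xc, yc, zc, mkH; simpl.
      - pose proof (Hx n). split; lra.
      - reflexivity.
      - pose proof (Hstep n). lra. }
    unfold B, closed_ball in Hq.
    assert (d H0 q > 1) by lra. nra. }
  assert (Hkey2 : forall ri rj n j, rj > 0 -> ri > 2 * rj ->
            d (cen xm zm rj j) (cen xm zm ri n) > rj).
  { intros ri rj n j Hrj Hri.
    pose proof (Htri (cen xm zm ri n) (cen xm zm rj j) H0).
    rewrite !HcH0 in H by lra. rewrite Hsym. lra. }
  assert (Hsmall : forall eps, eps > 0 -> exists n, xp n - xm n < eps).
  { intros eps He. destruct (Hcv eps He) as [N0 HN]. exists N0.
    specialize (HN N0 (le_n _)). unfold R_dist in HN.
    pose proof (Rle_abs (xp N0 - xm N0 - 0)). lra. }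
  assert (Hfam : forall N, exists (r : nat -> R) (nn : nat -> nat) (m Rm Zm : R),
    m > 0 /\ Rm > 0 /\ Zm > 0 /\
    (forall k, (k <= N)%nat -> (0 < r k <= Rm /\ m <= r k * (- xm (nn k)) /\
                 - xm (nn k) <= xbar /\ zm (nn k) <= Zm)) /\
    (forall k l, (k <= N)%nat -> (l <= N)%nat -> k <> l ->
       d (cen xm zm (r l) (nn l)) (cen xm zm (r k) (nn k)) > r l)).
  { induction N as [|N IH].
    - destruct (Hsmall xbar hxbar) as [n Hn].
      pose proof (Hx n). pose proof (Hz n).
      exists (fun _ => 1), (fun _ => n), (- xm n), 1, (zm n).
      split; [lra|]. split; [lra|]. split; [lra|]. split.
      + intros k _. repeat split; lra.
      + intros k l Hk Hl Hkl. exfalso. lia.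
    - destruct IH as [r [nn [m [Rm [Zm [Hm0 [HRm [HZm [Hk Hp2]]]]]]]]].
      set (eps := Rmin (Rmin (m/(2*Rm)) (a*m*m/(Rm*Rm*Zm))) xbar).
      assert (Heps : eps > 0).
      { unfold eps. repeat apply Rmin_pos; try lra.
        - apply Rdiv_lt_0_compat; lra.
        - apply Rdiv_lt_0_compat; [|apply Rmult_lt_0_compat; [apply Rmult_lt_0_compat|]]; try lra.
          apply Rmult_lt_0_compat; [apply Rmult_lt_0_compat|]; lra. }
      destruct (Hsmall eps Heps) as [n Hn].
      pose proof (Hx n) as Hxn. pose proof (Hz n) as Hzn.
      set (w := xp n - xm n) in *.
      assert (Hw : w > 0) by (unfold w; lra).
      assert (Hn1 : w < m/(2*Rm)).
      { eapply Rlt_le_trans; [exact Hn|]. unfold eps.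
        eapply Rle_trans; [apply Rmin_l|apply Rmin_l]. }
      assert (Hn2 : w <= a*m*m/(Rm*Rm*Zm)).
      { left. eapply Rlt_le_trans; [exact Hn|]. unfold eps.
        eapply Rle_trans; [apply Rmin_l|apply Rmin_r]. }
      assert (Hn3 : w < xbar).
      { eapply Rlt_le_trans; [exact Hn|]. unfold eps. apply Rmin_r. }
      set (ri := m / w).
      assert (Hriw : ri * w = m) by (unfold ri; field; lra).
      assert (Hri2 : ri > 2 * Rm).
      { assert (w * (2*Rm) < m/(2*Rm)*(2*Rm)) by (apply Rmult_lt_compat_r; lra).
        replace (m/(2*Rm)*(2*Rm)) with m in H by (field; lra).
        apply (Rmult_lt_reg_r w); lra. }
      assert (HZ : Rm*Rm*Zm <= a * w * ri * ri).
      { assert (HRRZ : Rm*Rm*Zm > 0) by (apply Rmult_lt_0_compat; [apply Rmult_lt_0_compat|]; lra).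
        assert (w * (Rm*Rm*Zm) <= a*m*m/(Rm*Rm*Zm)*(Rm*Rm*Zm)) by (apply Rmult_le_compat_r; lra).
        replace (a*m*m/(Rm*Rm*Zm)*(Rm*Rm*Zm)) with (a*m*m) in H by (field; lra).
        rewrite <- Hriw in H.
        apply (Rmult_le_reg_r w); [lra|]. nra. }
      exists (fun k => if Nat.eqb k (S N) then ri else r k),
             (fun k => if Nat.eqb k (S N) then n else nn k),
             (Rmin m (ri * (- xm n))), ri, (Rmax Zm (zm n)).
      split. { apply Rmin_pos; [lra|]. apply Rmult_lt_0_compat; lra. }
      split; [lra|]. split. { eapply Rlt_le_trans; [exact HZm|apply Rmax_l]. }
      split.
      + intros k Hkle. destruct (Nat.eqb_spec k (S N)) as [->|Hne].
        * assert (- xm n < w) by (unfold w; lra).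
          repeat split; try lra; first [apply Rmin_r | apply Rmax_r | lra].
        * assert (Hk' : (k <= N)%nat) by lia.
          destruct (Hk k Hk') as [[H1 H2] [H3 [H4 H5]]].
          repeat split; try lra.
          -- eapply Rle_trans; [apply Rmin_l|exact H3].
          -- eapply Rle_trans; [exact H5|apply Rmax_l].
      + intros k l Hkle Hlle Hkl.
        destruct (Nat.eqb_spec l (S N)) as [->|Hnel];
        destruct (Nat.eqb_spec k (S N)) as [->|Hnek]; try (exfalso; lia).
        *
          assert (Hk' : (k <= N)%nat) by lia.
          destruct (Hk k Hk') as [[H1 H2] [H3 [H4 H5]]].
          pose proof (Hx (nn k)) as Hxk. pose proof (Hz (nn k)) as Hzk.
          set (t := r k / ri).
          assert (Hri : ri > 0) by lra.
          assert (Ht : t * ri = r k) by (unfold t; field; lra).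
          assert (Ht0 : t > 0) by (unfold t; apply Rdiv_lt_0_compat; lra).
          rewrite <- Ht. apply Hkey1; auto.
          -- apply (Rmult_le_reg_r ri); [lra|].
             replace (t * - xm (nn k) * ri) with (r k * - xm (nn k)) by (rewrite <- Ht; ring).
             assert (w * ri = m) by (rewrite Rmult_comm; exact Hriw). unfold w in *. lra.
          -- apply (Rmult_le_reg_r ri); [lra|].
             replace (t * - xm (nn k) * ri) with (r k * - xm (nn k)) by (rewrite <- Ht; ring).
             nra.
          -- apply (Rmult_le_reg_r (ri*ri)); [nra|].
             replace (t * t * zm (nn k) * (ri * ri)) with (r k * r k * zm (nn k)) by (rewrite <- Ht; ring).
             assert (r k * r k * zm (nn k) <= Rm * Rm * Zm).
             { apply Rmult_le_compat; try nra. }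
             assert (a * w * (ri*ri) = a*w*ri*ri) by ring. unfold w in *. lra.
        *
          assert (Hl' : (l <= N)%nat) by lia.
          destruct (Hk l Hl') as [[H1 H2] _].
          apply Hkey2; lra.
        * apply Hp2; lia. }
  intros [N0 [HN0 HBCP]].
  destruct (Hfam N0) as [r [nn [m [Rm [Zm [Hm0 [HRm [HZm [Hk Hp2]]]]]]]]].
  set (cc := fun k => cen xm zm (r k) (nn k)).
  set (ball := fun k => closed_ball d (cc k) (r k)).
  assert (Hc0 : forall k, (k <= N0)%nat -> ball k H0).
  { intros k Hk'. unfold ball, cc, closed_ball. rewrite HcH0; [lra|].
    destruct (Hk k Hk') as [[H1 _] _]; lra. }
  assert (Hsep : forall k l, (k <= N0)%nat -> (l <= N0)%nat -> ball l (cc k) -> k = l).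
  { intros k l Hk' Hl' Hb. destruct (Nat.eq_dec k l) as [e|ne]; [exact e|].
    exfalso. pose proof (Hp2 k l Hk' Hl' ne). unfold ball, closed_ball, cc in *. lra. }
  assert (Hself : forall k, (k <= N0)%nat -> ball k (cc k)).
  { intros k Hk'. unfold ball, closed_ball. replace (d (cc k) (cc k)) with 0.
    - destruct (Hk k Hk') as [[H1 _] _]; lra.
    - symmetry. apply Heq0. reflexivity. }
  set (A := fun p => exists k, (k <= N0)%nat /\ p = cc k).
  set (Bf := fun b => exists k, (k <= N0)%nat /\ b = ball k).
  destruct (HBCP A Bf) as [Ff [HF1 [HF2 HF3]]].
  - exists Rm. intros p [k [Hk' ->]]. rewrite Hsym. unfold cc. rewrite HcH0.
    + destruct (Hk k Hk') as [[_ H2] _]; lra.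
    + destruct (Hk k Hk') as [[H1 _] _]; lra.
  - intros b [k [Hk' ->]]. exists (cc k), (r k). split; [|reflexivity].
    destruct (Hk k Hk') as [[H1 _] _]; lra.
  - intros p [k [Hk' ->]]. exists (r k). split.
    + destruct (Hk k Hk') as [[H1 _] _]; lra.
    + exists k. split; [exact Hk'|reflexivity].
  - assert (HinF : forall k, (k <= N0)%nat -> Ff (ball k)).
    { intros k Hk'. destruct (HF2 (cc k)) as [b [Hb1 Hb2]].
      { exists k. split; [exact Hk'|reflexivity]. }
      destruct (HF1 b Hb1) as [l [Hl' ->]].
      rewrite (Hsep k l Hk' Hl' Hb2). exact Hb1. }
    assert (Hlen := HF3 H0 (map ball (seq 0 (S N0)))).
    rewrite length_map, length_seq in Hlen.
    assert (S N0 <= N0)%nat; [|lia].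
    apply Hlen.
    + apply NoDup_map_NoDup_ForallPairs; [|apply seq_NoDup].
      intros k l Hk' Hl' Heq. apply in_seq in Hk'. apply in_seq in Hl'.
      apply (Hsep k l); try lia. rewrite <- Heq. apply Hself. lia.
    + intros b Hb. apply in_map_iff in Hb. destruct Hb as [k [<- Hk']].
      apply in_seq in Hk'. split; [apply HinF; lia|apply Hc0; lia].
Qed.
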